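(* In the tabular setting with possibly stochastic empirical dynamics, every maximizer $\pi^*$ of $\bar R(\pi)$ and every maximizer $\pi_1^*$ of $\bar R_1(\pi)$ over all policies satisfy $$\operatorname{supp}(\pi^*(\cdot\mid s))\subseteq\operatorname{supp}(\beta(\cdot\mid s))\quad\text{and}\quad \operatorname{supp}(\pi_1^*(\cdot\mid s))\subseteq\operatorname{supp}(\beta(\cdot\mid s))\qquad\text{for all } s\in\mathcal D.$$
   Context: Finite state space $\mathcal S$ and finite action space $\mathcal A$. $\mathcal D$ is a finite dataset of transitions $(s,a,s')$; ''$s\in\mathcal D$'' means $s$ occurs as the first component of some transition. $\beta(a\mid s)$ is the empirical behavior policy (fraction of transitions from $s$ with action $a$). $M(s'\mid s,a)$ is the empirical dynamics model: the fraction of transitions from $(s,a)$ ending in $s'$ if $(s,a)$ occurs in $\mathcal D$, and $0$ otherwise. $N(s'\mid s)=\sum_a\beta(a\mid s)M(s'\mid s,a)$. $V:\mathcal S\to\mathbb R$ is a fixed real function and $\alpha\ge 0$ a constant. $Z(s)=\sum_{s'}\exp(\alpha V(s'))N(s'\mid s)$. A policy $\pi$ assigns a distribution $\pi(\cdot\mid s)$ on $\mathcal A$ to each state; $M(s'\mid s,\pi(\cdot\mid s)):=\sum_a\pi(a\mid s)M(s'\mid s,a)$. $\mathbb E_{(s,s')\sim\mathcal D}$ denotes the average over the transitions of $\mathcal D$. The objectives (with $\log 0=-\infty$) are $$\bar R(\pi)=\mathbb E_{(s,s')\sim\mathcal D}\Big[\tfrac{\exp(\alpha V(s'))}{Z(s)}\log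 M(s'\mid s,\pi(\cdot\mid s))\Big],\qquad \bar R_1(\pi)=\mathbb E_{(s,s')\sim\mathcal D}\Big[\tfrac{\exp(\alpha V(s'))}{\exp(\alpha V(s))}\log M(s'\mid s,\pi(\cdot\mid s))\Big].$$ *)

(* Defs.v *)
From HB Require Import structures.
From mathcomp Require Import all_boot all_order all_algebra.
From mathcomp Require Import all_classical all_reals all_analysis.
Set Implicit Arguments. Unset Strict Implicit. Unset Printing Implicit Defensive.
Import Order.TTheory GRing.Theory Num.Theory.
Local Open Scope ring_scope.

Section Tabular.
Variables (R : realType) (S A : finType).

(* A transition (s, a, s') is the triple ((s, a), s'):
   t.1.1 = s, t.1.2 = a, t.2 = s'. A dataset is a finite list (multiset). *)
Definition trans := (S * A * S)%type.

Variable D : seq trans.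

Definition in_data (s : S) : bool := has (fun t : trans => t.1.1 == s) D.

Definition cnt_s (s : S) : nat := count (fun t : trans => t.1.1 == s) D.
Definition cnt_sa (s : S) (a : A) : nat :=
  count (fun t : trans => (t.1.1 == s) && (t.1.2 == a)) D.
Definition cnt_sas (s : S) (a : A) (s' : S) : nat :=
  count (fun t : trans => [&& t.1.1 == s, t.1.2 == a & t.2 == s']) D.

Definition beta (s : S) (a : A) : R := (cnt_sa s a)%:R / (cnt_s s)%:R.

Definition Mdyn (s : S) (a : A) (s' : S) : R :=
  if (0 < cnt_sa s a)%N then (cnt_sas s a s')%:R / (cnt_sa s a)%:R else 0.

Definition Ndyn (s s' : S) : R := \sum_(a : A) beta s a * Mdyn s a s'.

Definition Zpart (alpha : R) (V : S -> R) (s : S) : R :=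
  \sum_(s' : S) expR (alpha * V s') * Ndyn s s'.

Definition is_policy (pi : S -> A -> R) : Prop :=
  forall s, (forall a, 0 <= pi s a) /\ \sum_(a : A) pi s a = 1.

Definition Mpol (pi : S -> A -> R) (s s' : S) : R :=
  \sum_(a : A) pi s a * Mdyn s a s'.

Definition elog (x : R) : \bar R := if 0 < x then (ln x)%:E else -oo%E.

Definition avg_obj (w : S -> S -> R) (pi : S -> A -> R) : \bar R :=
  (((size D)%:R)^-1%:E *
   \sum_(t <- D) ((w t.1.1 t.2)%:E * elog (Mpol pi t.1.1 t.2)))%E.

Definition Rbar_obj (alpha : R) (V : S -> R) (pi : S -> A -> R) : \bar R :=
  avg_obj (fun s s' => expR (alpha * V s') / Zpart alpha V s) pi.

Definition Rbar1_obj (alpha : R) (V : S -> R) (pi : S -> A -> R) : \bar R :=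
  avg_obj (fun s s' => expR (alpha * V s') / expR (alpha * V s)) pi.

Definition is_maximizer (J : (S -> A -> R) -> \bar R) (pi : S -> A -> R) : Prop :=
  is_policy pi /\ forall pi', is_policy pi' -> (J pi' <= J pi)%E.

End Tabular.

Definition supp (R : realType) (A : Type) (p : A -> R) : set A :=
  [set a | p a != 0].

(* Main.v *)
Require Import Defs.
From mathcomp Require Import all_boot all_order all_algebra.
From mathcomp Require Import all_classical all_reals all_analysis.
Import Order.TTheory GRing.Theory Num.Theory.
Local Open Scope classical_set_scope.
Local Open Scope ring_scope.

Section Helpers.
Variables (R : realType) (S A : finType) (D : seq (trans S A)).

Lemma cnt_pos t (P : pred (trans S A)) : t \in D -> P t -> (0 < count P D)%N.
Proof. by move=> tD Pt; rewrite -has_count; apply/hasP; exists t. Qed.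
Arguments cnt_pos {t P}.

Lemma Mdyn_ge0 s a s' : 0 <= @Mdyn R S A D s a s'.
Proof. by rewrite /Mdyn; case: ifP => // _; rewrite divr_ge0. Qed.

Lemma beta_ge0 s a : 0 <= @beta R S A D s a.
Proof. by rewrite /beta divr_ge0. Qed.

Lemma cnt_sa_le s a : (cnt_sa D s a <= cnt_s D s)%N.
Proof.
rewrite /cnt_sa /cnt_s; apply: sub_count => t /=; by case/andP.
Qed.

Lemma Mdyn_pos {t} : t \in D -> 0 < @Mdyn R S A D t.1.1 t.1.2 t.2.
Proof.
move=> tD.
have h1 : (0 < cnt_sa D t.1.1 t.1.2)%N.
  by rewrite /cnt_sa /cnt_sas /cnt_s; apply: (cnt_pos tD); rewrite !eqxx.
have h2 : (0 < cnt_sas D t.1.1 t.1.2 t.2)%N.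
  by rewrite /cnt_sa /cnt_sas /cnt_s; apply: (cnt_pos tD); rewrite !eqxx.
by rewrite /Mdyn h1 divr_gt0 // ltr0n.
Qed.

Lemma beta_pos {t} : t \in D -> 0 < @beta R S A D t.1.1 t.1.2.
Proof.
move=> tD.
have h1 : (0 < cnt_sa D t.1.1 t.1.2)%N.
  by rewrite /cnt_sa /cnt_sas /cnt_s; apply: (cnt_pos tD); rewrite !eqxx.
have h2 := leq_trans h1 (cnt_sa_le t.1.1 t.1.2).
by rewrite /beta divr_gt0 // ltr0n.
Qed.

Lemma Ndyn_pos {t} : t \in D -> 0 < @Ndyn R S A D t.1.1 t.2.
Proof.
move=> tD; rewrite /Ndyn (bigD1 t.1.2) //=.
apply: (lt_le_trans (mulr_gt0 (beta_pos tD) (Mdyn_pos tD))).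
rewrite lerDl; apply: sumr_ge0 => a _; exact: mulr_ge0 (beta_ge0 _ _) (Mdyn_ge0 _ _ _).
Qed.

Lemma Mpol_ge0 pi s s' : is_policy pi -> 0 <= @Mpol R S A D pi s s'.
Proof.
move=> hp; apply: sumr_ge0 => a _; apply: mulr_ge0; first by case: (hp s).
exact: Mdyn_ge0.
Qed.

Lemma sum_ind (c : A) (F : A -> R) : \sum_(b : A) (b == c)%:R * F b = F c.
Proof.
rewrite (bigD1 c) //= eqxx mul1r big1 ?addr0 // => b /negbTE ->.
by rewrite mul0r.
Qed.

Variable w : S -> S -> R.
Hypothesis wpos : forall t, t \in D -> 0 < w t.1.1 t.2.

Lemma f_fin pi : (forall t, t \in D -> 0 < @Mpol R S A D pi t.1.1 t.2) ->
  avg_obj D w pi =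
  ((size D)%:R^-1 * \sum_(t <- D) w t.1.1 t.2 * ln (Mpol D pi t.1.1 t.2))%:E.
Proof.
move=> hp; rewrite /avg_obj EFinM -sumEFin; congr (_ * _)%E.
apply: eq_big_seq => t tD; rewrite /elog hp // EFinM //.
Qed.

Lemma main pi s : is_maximizer (avg_obj D w) pi -> in_data D s ->
  supp (pi s) `<=` supp (@beta R S A D s).
Proof.
move=> [hpol hmax] hs.
have [t0 t0D /eqP t0s] := hasP hs.
have sizepos : 0 < (size D)%:R^-1 :> R.
  by rewrite invr_gt0 ltr0n; case: (D) t0D.
pose pib s1 a := if in_data D s1 then @beta R S A D s1 a else pi s1 a.
have pib_pol : is_policy pib.
  move=> s1; rewrite /pib; case hd: (in_data D s1); last exact: hpol.
  split=> [a|]; first exact: beta_ge0.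
  have [t1 t1D /eqP t1s] := hasP hd.
  have cpos : (0 < cnt_s D s1)%N by rewrite /cnt_sa /cnt_sas /cnt_s; apply: (cnt_pos t1D); rewrite /= t1s.
  rewrite /beta -mulr_suml -natr_sum.
  have -> : (\sum_(a : A) cnt_sa D s1 a = cnt_s D s1)%N.
    rewrite /cnt_sa /cnt_s; elim: (D) => [|x l IH]; first by rewrite big1.
    rewrite /= big_split /= IH; congr (_ + _)%N.
    case: (x.1.1 == s1) => /=; last by rewrite big1.
    by rewrite (bigD1 x.1.2) //= eqxx big1 // => b /negbTE; rewrite eq_sym => ->.
  by rewrite divff // pnatr_eq0 -lt0n.
have pib_pos : forall t, t \in D -> 0 < @Mpol R S A D pib t.1.1 t.2.
  move=> t tD; rewrite /Mpol /pib.
  have -> : in_data D t.1.1 by apply/hasP; exists t.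
  exact: Ndyn_pos.
have pipos : forall t, t \in D -> 0 < @Mpol R S A D pi t.1.1 t.2.
  apply/allP; case: (boolP (all _ _)) => // /allPn [t1 t1D hn].
  have := hmax _ pib_pol; rewrite f_fin //.
  suff -> : avg_obj D w pi = -oo%E by [].
  rewrite /avg_obj (perm_big _ (perm_to_rem t1D)) big_cons /elog (negbTE hn).
  rewrite mulrNy gtr0_sg ?wpos //.
  match goal with |- (mule _ ?Y = _) => have -> : Y = -oo%E by rewrite mul1e; exact: addNye end.
  by rewrite mulrNy gtr0_sg // mul1e.
move=> a /= hpa; apply: contraT => /negPn /eqP hb.
have hsa : cnt_sa D s a = 0%N.
  apply/eqP; move: hb; rewrite /beta.
  have cpos : (0 < cnt_s D s)%N by rewrite /cnt_sa /cnt_sas /cnt_s; apply: (cnt_pos t0D); rewrite /= t0s.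
  by move/eqP; rewrite mulf_eq0 invr_eq0 !pnatr_eq0 -[cnt_s D s == 0%N]negbK -lt0n cpos orbF.
have M0 : forall s', @Mdyn R S A D s a s' = 0 by move=> s'; rewrite /Mdyn hsa.
set a0 := t0.1.2.
have pa0 : 0 <= pi s a by case: (hpol s).
have pa : 0 < pi s a by rewrite lt_def hpa.
pose pi' s1 b := pi s1 b + (if s1 == s then
   (if b == a0 then pi s a else 0) - (if b == a then pi s a else 0) else 0).
have M0' : @Mdyn R S A D s a0 t0.2 > 0 by rewrite -t0s; exact: Mdyn_pos.
have aa0 : a0 != a.
  apply/eqP => e; have := Mdyn_pos t0D; rewrite t0s -/a0 e M0 ltxx //.
have si : forall (c : A) (x : R) (F : A -> R),
    \sum_(b : A) (if b == c then x else 0) * F b = x * F c.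
  move=> c x F; rewrite (bigD1 c) //= eqxx big1 ?addr0 // => b /negbTE ->.
  by rewrite mul0r.
have si1 : forall (c : A) (x : R), \sum_(b : A) (if b == c then x else 0) = x.
  move=> c x; rewrite -[RHS]mulr1 -(si c x (fun _ => 1)).
  by apply: eq_bigr => b _; rewrite mulr1.
have pi'_pol : is_policy pi'.
  move=> s1; rewrite /pi'; case: (eqVneq s1 s) => [->|ns]; last first.
    by under eq_bigr do rewrite addr0; split; [move=> b; rewrite addr0; exact: (hpol s1).1|exact: (hpol s1).2].
  split=> [b|].
    have := (hpol s).1 b.
    case: (eqVneq b a) => [->|nba]; first by rewrite [a == a0]eq_sym (negbTE aa0) sub0r subrr.
    rewrite subr0; case: (b == a0) => h //.
      by rewrite addr_ge0.
    by rewrite addr0.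
  rewrite big_split /= (hpol s).2 sumrB !si1 subrr addr0 //.
have Mpol' : forall s1 s2, @Mpol R S A D pi' s1 s2 =
    @Mpol R S A D pi s1 s2 + (if s1 == s then pi s a * @Mdyn R S A D s1 a0 s2 else 0).
  move=> s1 s2; rewrite /Mpol /pi'.
  under eq_bigr do rewrite mulrDl.
  rewrite big_split /=; congr (_ + _).
  case: (eqVneq s1 s) => [->|_]; last by rewrite big1 // => b _; rewrite !mul0r.
  under eq_bigr do rewrite mulrBl.
  by rewrite sumrB !si M0 mulr0 subr0.
have pi'pos : forall t, t \in D -> 0 < @Mpol R S A D pi' t.1.1 t.2.
  move=> t tD; rewrite Mpol'; apply: (lt_le_trans (pipos t tD)).
  rewrite lerDl; case: ifP => // _; rewrite mulr_ge0 // Mdyn_ge0 //.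
have := hmax _ pi'_pol; rewrite !f_fin // lee_fin ler_pM2l //.
rewrite leNgt => /negP H; exfalso; apply: H.
rewrite (perm_big _ (perm_to_rem t0D)) [X in _ < X](perm_big _ (perm_to_rem t0D)).
rewrite !big_cons; apply: ltr_leD.
  rewrite ltr_pM2l ?wpos // ltr_ln ?posrE ?pipos ?pi'pos //.
  rewrite Mpol' t0s eqxx ltrDl mulr_gt0 //.
rewrite big_seq_cond [X in _ <= X]big_seq_cond; apply: ler_sum => t /andP[tD _].
have tD' : t \in D by move: tD; exact: mem_rem.
rewrite ler_pM2l ?wpos // ler_ln ?posrE ?pipos ?pi'pos //.
rewrite Mpol' lerDl; case: ifP => // _; rewrite mulr_ge0 // Mdyn_ge0 //.
Qed.

End Helpers.

Theorem proposition2 (R : realType) (S A : finType) (D : seq (trans S A))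
    (V : S -> R) (alpha : R) (halpha : 0 <= alpha) :
  (forall pistar : S -> A -> R,
     is_maximizer (Rbar_obj D alpha V) pistar ->
     forall s : S, in_data D s -> supp (pistar s) `<=` supp (@beta R S A D s)) /\
  (forall pi1star : S -> A -> R,
     is_maximizer (Rbar1_obj D alpha V) pi1star ->
     forall s : S, in_data D s -> supp (pi1star s) `<=` supp (@beta R S A D s)).
Proof.
split=> pi hm s hs; apply: (@main R S A D _ _ pi s hm hs) => t tD.
  rewrite divr_gt0 ?expR_gt0 // /Zpart (bigD1 t.2) //=.
  apply: (lt_le_trans (mulr_gt0 (expR_gt0 (alpha * V t.2)) (@Ndyn_pos R S A D t tD))).
  rewrite lerDl; apply: sumr_ge0 => s' _; apply: mulr_ge0; first exact: expR_ge0.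
  apply: sumr_ge0 => a _; exact: mulr_ge0 (beta_ge0 _ _ _ _ _ _) (Mdyn_ge0 _ _ _ _ _ _ _).
by rewrite divr_gt0 ?expR_gt0.
Qed.
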